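(* Let $(x_k)_{k\geq0}$ be a nonnegative, monotone nonincreasing sequence of real numbers, and let $G=\{k\geq 0: x_k/x_{k+1}<2\}$. Then for all $n\geq 0$, \[ \sum_{k\leq n} x_k \leq 3x_0 + 3\sum_{\substack{k\in G\\ k\leq n}} x_{k+1}. \] *)

(* Defs.v *)
From HB Require Import structures.
From mathcomp Require Import all_boot all_order all_algebra.
From mathcomp Require Import reals.
Set Implicit Arguments. Unset Strict Implicit. Unset Printing Implicit Defensive.

(* Main.v *)
Require Import Defs.
From HB Require Import structures.
From mathcomp Require Import all_boot all_order all_algebra.
From mathcomp Require Import reals.
From mathcomp Require Import lra.
Import Order.TTheory GRing.Theory Num.Theory.
Local Open Scope ring_scope.

Theorem lemma2p4 (R : realType) (x : nat -> R)
  (x_ge0 : forall k, 0 <= x k)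
  (x_noninc : forall k, x k.+1 <= x k) (n : nat) :
  \sum_(0 <= k < n.+1) x k <=
  3 * x 0%N + 3 * \sum_(0 <= k < n.+1 | x k / x k.+1 < 2) x k.+1.
Proof.
have key : forall m, \sum_(0 <= k < m.+1) x k + 2 * x m.+1 <=
  3 * x 0%N + 3 * \sum_(0 <= k < m.+1 | x k / x k.+1 < 2) x k.+1.
  elim=> [|m IH].
    rewrite [X in _ <= _ + 3 * X]big_mkcond !big_nat1 /=.
    have h1 := x_noninc 0%N; have h2 := x_ge0 1%N.
    case: ifP => _; lra.
  rewrite big_nat_recr //= [X in _ <= _ + 3 * X]big_mkcond big_nat_recr //= -big_mkcond.
  have h1 := x_noninc m.+1; have h2 := x_ge0 m.+2.
  case: ifP => H.
    lra.
  have : 2 * x m.+2 <= x m.+1.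
    move/negbT: H; rewrite -leNgt.
    have [z|nz] := eqVneq (x m.+2) 0.
      by rewrite z mulr0 (x_ge0 m.+1).
    have pz : 0 < x m.+2 by rewrite lt_def nz x_ge0.
    by rewrite ler_pdivlMr.
  lra.
have := key n; have := x_ge0 n.+1; lra.
Qed.
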